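(* Let $\mathcal C\subseteq\{0,1,2\}^n$ be a ternary code all of whose codewords have $\ell_1$-weight $w$. Then $\mathcal C$ is an $(n,2w-2,w)_3$ code if and only if both of the following hold: (a') the cliques $K_u$, $u\in\mathcal C$, form a packing of $K_n$ (i.e., they are pairwise edge-disjoint); (b') each position $i\in[n]$ is colored by $2$ in at most one codeword, i.e., there is at most one $u\in\mathcal C$ with $u_i=2$.
   Context: The $\ell_1$-distance between $u,v\in\{0,1,2\}^n$ is $\sum_i|u_i-v_i|$ and the $\ell_1$-weight of $u$ is its distance to $0$. An $(n,d,w)_3$ code is a set of vectors in $\{0,1,2\}^n$ each of $\ell_1$-weight $w$ with pairwise $\ell_1$-distance at least $d$. $K_n$ is the complete graph on vertex set $[n]$. For $u\in\{0,1,2\}^n$, $K_u$ is the complete subgraph of $K_n$ on vertex set $\mathrm{supp}(u)=\{i:u_i\ne0\}$, with vertex $i$ colored by $u_i$. A packing of a graph is a set of subgraphs such that each edge lies in at most one of them. *)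

(* Defs.v *)
From mathcomp Require Import all_boot.
Set Implicit Arguments. Unset Strict Implicit. Unset Printing Implicit Defensive.

Definition tvec (n : nat) := {ffun 'I_n -> 'I_3}.

Definition l1dist n (u v : tvec n) : nat :=
  \sum_(i < n) ((u i - v i) + (v i - u i))%N.

Definition l1weight n (u : tvec n) : nat := \sum_(i < n) (u i : nat).

Definition is_code3 n (d w : nat) (C : {set tvec n}) : Prop :=
  (forall u, u \in C -> l1weight u = w) /\
  (forall u v, u \in C -> v \in C -> u != v -> d <= l1dist u v).

(* support of u : vertex set of K_u *)
Definition supp n (u : tvec n) : {set 'I_n} := [set i | (u i : nat) != 0%N].

Definition edge_in n (u : tvec n) (i j : 'I_n) : bool :=
  [&& i != j, i \in supp u & j \in supp u].

Definition clique_packing n (C : {set tvec n}) : Prop :=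
  forall u v, u \in C -> v \in C -> u != v ->
    forall i j : 'I_n, ~~ (edge_in u i j && edge_in v i j).

Definition two_at_most_once n (C : {set tvec n}) : Prop :=
  forall i : 'I_n, #|[set u in C | (u i : nat) == 2%N]| <= 1.

(* Main.v *)
Require Import Defs.
From mathcomp Require Import all_boot.
From mathcomp Require Import zify.
Set Implicit Arguments.

Definition Smin n (u v : tvec n) : nat := \sum_(i < n) minn (u i) (v i).

Lemma distE n (u v : tvec n) : l1dist u v + 2 * Smin u v = l1weight u + l1weight v.
Proof.
rewrite /l1dist /Smin /l1weight big_distrr /= -!big_split /=.
apply: eq_bigr => i _; lia.
Qed.

Lemma keyS n (u v : tvec n) : (Smin u v <= 1) <->
  ((forall i j, ~~ (edge_in u i j && edge_in v i j)) /\
   (forall i, ~ ((u i : nat) = 2 /\ (v i : nat) = 2))).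
Proof.
split.
- move=> HS; split.
  + move=> i j; apply/negP => /andP [/and3P [ij ui uj] /and3P [_ vi vj]].
    rewrite !inE in ui uj vi vj.
    have : minn (u i) (v i) + minn (u j) (v j) <= Smin u v.
      rewrite /Smin (bigD1 i) //= (bigD1 j) /=; last by rewrite eq_sym.
      by rewrite addnA leq_addr.
    lia.
  + move=> i [h1 h2].
    have : minn (u i) (v i) <= Smin u v by rewrite /Smin (bigD1 i) //= leq_addr.
    rewrite h1 h2; lia.
- move=> [H1 H2].
  case: (pickP (fun i => ((u i : nat) != 0) && ((v i : nat) != 0))) => [i /andP[ui vi] | none].
  + rewrite /Smin (bigD1 i) //= big1 => [|j ji].
      rewrite addn0; have := H2 i; have := ltn_ord (u i); have := ltn_ord (v i).
      case: (u i : nat) ui => [|[|[|k]]] //; case: (v i : nat) vi => [|[|[|k']]] //.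
      by move=> _ _ _ _ [].
    move: (H1 i j); rewrite /edge_in !inE (eq_sym i) ji ui vi /= => /negP h.
    case: ((u j : nat) =P 0) => [->|/eqP a]; first by rewrite min0n.
    case: ((v j : nat) =P 0) => [->|/eqP b]; first by rewrite minn0.
    by case: h; rewrite a b.
  + rewrite /Smin big1 // => j _; move: (none j) => /= /negP h.
    case: ((u j : nat) =P 0) => [->|/eqP a]; first by rewrite min0n.
    case: ((v j : nat) =P 0) => [->|/eqP b]; first by rewrite minn0.
    by case: h; rewrite a b.
Qed.

Theorem corollary1 (n w : nat) (C : {set tvec n}) :
  (forall u, u \in C -> l1weight u = w) ->
  (is_code3 (2 * w - 2) w C <-> clique_packing C /\ two_at_most_once C).
Proof.
move=> Hw; split.
- case=> _ Hd.
  have key : forall u v, u \in C -> v \in C -> u != v -> Smin u v <= 1.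
    move=> u v uC vC uv; have := Hd u v uC vC uv; have := distE u v.
    rewrite !Hw //; lia.
  split.
  + move=> u v uC vC uv; exact: (proj1 ((keyS u v).1 (key u v uC vC uv))).
  + move=> i; apply/card_le1_eqP => u v; rewrite !inE => /andP[uC /eqP ui] /andP[vC /eqP vi].
    case: (eqVneq u v) => [->//|uv].
    by case: ((proj2 ((keyS u v).1 (key u v uC vC uv))) i).
- case=> Hp H2; split => // u v uC vC uv.
  have : Smin u v <= 1.
    apply/keyS; split; first exact: Hp.
    move=> i [a b]; have /card_le1_eqP E := H2 i.
    have : v = u by apply: E; rewrite inE ?uC ?vC /= ?a ?b.
    by move=> e; rewrite e eqxx in uv.
  have := distE u v; rewrite !Hw //; lia.
Qed.
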